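(* Let $a\in(0,1)$, $b>0$, $m\in\mathbb{R}$, and for $t\in(0,1)$ let \[ G_m(t)=F(1-a,b;2b+1;t)-(1-t)^{1-m}F(1-a,b+1;2b+1;t). \] Let $m_0=\frac{a+2b}{1+2b}$ and define \[ E^+=\{m\le m_0\}\cap\Bigl(\{a+b\ge1>m\}\cup\{m<a+b<1\}\cup\{m=a+b\le\tfrac12\}\Bigr), \] \[ E^-=\{m\ge m_0\}\cap\Bigl(\{a+b\ge1,\ m\ge1\}\cup\{\tfrac12\le m=a+b<1\}\cup\{a+b<1,\ a+b<m\}\Bigr), \] as sets of triples $(a,b,m)$. (i) If $G_m(t)\ge0$ for all $t\in(0,1)$, then $(a,b,m)\in E^+$. (ii) If $G_m(t)\le0$ for all $t\in(0,1)$, then $(a,b,m)\in E^-$.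
   Context: For real $a,b,c$ with $c\notin\{0,-1,-2,\dots\}$, $F(a,b;c;x)=\sum_{n\ge0}\frac{(a)_n(b)_n}{(c)_n}\frac{x^n}{n!}$ for $x\in(-1,1)$, where $(a)_0=1$ and $(a)_n=a(a+1)\cdots(a+n-1)$. *)

(* Defs.v *)
From Stdlib Require Import Reals.
From Coquelicot Require Import Coquelicot.
Open Scope R_scope.

Fixpoint poch (a : R) (n : nat) : R :=
  match n with
  | O => 1
  | S k => poch a k * (a + INR k)
  end.

Definition hyp_term (a b c x : R) (n : nat) : R :=
  poch a n * poch b n / poch c n * x ^ n / INR (Stdlib.Arith.Factorial.fact n).

Definition hypF (a b c x : R) : R := Series (hyp_term a b c x).

Definition Gm (a b m t : R) : R :=
  hypF (1 - a) b (2 * b + 1) t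
  - Rpower (1 - t) (1 - m) * hypF (1 - a) (b + 1) (2 * b + 1) t.

Definition m0 (a b : R) : R := (a + 2 * b) / (1 + 2 * b).

Definition E_plus (a b m : R) : Prop :=
  m <= m0 a b /\
  ((a + b >= 1 /\ 1 > m) \/ (m < a + b /\ a + b < 1) \/ (m = a + b /\ a + b <= 1/2)).

Definition E_minus (a b m : R) : Prop :=
  m >= m0 a b /\
  ((a + b >= 1 /\ m >= 1) \/ (1/2 <= m /\ m = a + b /\ a + b < 1) \/ (a + b < 1 /\ a + b < m)).

(* Main.v *)
Require Import Defs.
From Stdlib Require Import Reals Lra Lia Psatz ZArith.
From Stdlib Require Import Factorial.
From Coquelicot Require Import Coquelicot.
Open Scope R_scope.

Lemma poch_pos x n : 0 < x -> 0 < poch x n.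
Proof. intros Hx; induction n; simpl. lra. apply Rmult_lt_0_compat; auto. pose proof (pos_INR n); lra. Qed.

Definition hc (al be ga : R) (n : nat) : R := poch al n * poch be n / poch ga n / INR (fact n).
Definition bin (s : R) (n : nat) : R := poch s n / INR (fact n).

Lemma fact_S_INR n : INR (fact (S n)) = INR (S n) * INR (fact n).
Proof. change (fact (S n)) with (S n * fact n)%nat. apply mult_INR. Qed.

Lemma hc_pos al be ga n : 0 < al -> 0 < be -> 0 < ga -> 0 < hc al be ga n.
Proof. intros. unfold hc. pose proof (poch_pos al n H). pose proof (poch_pos be n H0).
 pose proof (poch_pos ga n H1). pose proof (INR_fact_lt_0 n).
 apply Rdiv_lt_0_compat; auto. apply Rdiv_lt_0_compat; auto. apply Rmult_lt_0_compat; auto. Qed.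

Lemma bin_pos s n : 0 < s -> 0 < bin s n.
Proof. intros. unfold bin. apply Rdiv_lt_0_compat. apply poch_pos; auto. apply INR_fact_lt_0. Qed.

Lemma hc_S al be ga n : 0 < ga -> hc al be ga (S n) =
  hc al be ga n * ((al + INR n) * (be + INR n) / ((ga + INR n) * INR (S n))).
Proof. intros. unfold hc. rewrite fact_S_INR. simpl poch.
 pose proof (poch_pos ga n H). pose proof (INR_fact_lt_0 n). pose proof (pos_INR n).
 rewrite S_INR. field. repeat split; lra. Qed.

Lemma bin_S s n : bin s (S n) = bin s n * ((s + INR n) / INR (S n)).
Proof. intros. unfold bin. rewrite fact_S_INR. simpl poch.
 pose proof (INR_fact_lt_0 n). pose proof (pos_INR n).
 rewrite S_INR. field. repeat split; lra. Qed.

Lemma hyp_term_hc al be ga x n : hyp_term al be ga x n = hc al be ga n * x ^ n.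
Proof. unfold hyp_term, hc, Rdiv. ring. Qed.

Lemma hypF_PS al be ga x : hypF al be ga x = PSeries (hc al be ga) x.
Proof. unfold hypF, PSeries. apply Series_ext. intro; apply hyp_term_hc. Qed.

Lemma nat_arch x : exists N : nat, x <= INR N.
Proof. destruct (archimed x) as [H1 _]. destruct (ZArith_dec.Z_le_dec 0 (up x)).
 - exists (Z.to_nat (up x)). rewrite INR_IZR_INZ, Z2Nat.id; [lra | lia].
 - exists 0%nat. simpl. assert (IZR (up x) < 0). apply IZR_lt. lia. lra. Qed.

Lemma ratio_tail (c d : nat -> R) N :
  (forall n, 0 < c n) -> (forall n, 0 < d n) ->
  (forall n, (N <= n)%nat -> c (S n) * d n <= d (S n) * c n) ->
  forall k, c (N + k)%nat <= c N / d N * d (N + k)%nat.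
Proof. intros Hc Hd H k. induction k.
 - rewrite Nat.add_0_r. field_simplify. lra. specialize (Hd N); lra.
 - rewrite Nat.add_succ_r. pose proof (H (N+k)%nat ltac:(lia)).
   pose proof (Hd (N+k)%nat). pose proof (Hd (S (N+k))). pose proof (Hc N). pose proof (Hd N).
   apply Rmult_le_reg_r with (d (N+k)%nat); auto.
   assert (0 <= c N / d N) by (apply Rlt_le, Rdiv_lt_0_compat; auto).
   nra. Qed.

Lemma ratio_upper (c d : nat -> R) N :
  (forall n, 0 < c n) -> (forall n, 0 < d n) ->
  (forall n, (N <= n)%nat -> c (S n) * d n <= d (S n) * c n) ->
  exists K, 0 <= K /\ forall n, c n <= K * d n.
Proof. intros Hc Hd H.
 assert (H0: forall M, exists K, 0 <= K /\ forall n, (n <= M)%nat -> c n <= K * d n).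
 { induction M.
   - exists (c 0%nat / d 0%nat). split. apply Rlt_le, Rdiv_lt_0_compat; auto.
     intros n Hn. assert (n = 0%nat) by lia. subst. field_simplify. lra. specialize (Hd 0%nat); lra.
   - destruct IHM as [K [HK1 HK2]]. exists (Rmax K (c (S M) / d (S M))). split.
     apply Rle_trans with K; auto. apply Rmax_l.
     intros n Hn. destruct (Nat.eq_dec n (S M)).
     + subst. apply Rle_trans with (c (S M) / d (S M) * d (S M)).
       field_simplify. lra. specialize (Hd (S M)); lra.
       apply Rmult_le_compat_r. specialize (Hd (S M)); lra. apply Rmax_r.
     + apply Rle_trans with (K * d n). apply HK2; lia.
       apply Rmult_le_compat_r. specialize (Hd n); lra. apply Rmax_l. }
 destruct (H0 N) as [K [HK1 HK2]].
 exists (Rmax K (c N / d N)). split. apply Rle_trans with K; auto. apply Rmax_l.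
 intros n. destruct (le_lt_dec n N).
 - apply Rle_trans with (K * d n). auto. apply Rmult_le_compat_r. specialize (Hd n); lra. apply Rmax_l.
 - replace n with (N + (n - N))%nat by lia. eapply Rle_trans. apply (ratio_tail c d N Hc Hd H).
   apply Rmult_le_compat_r. specialize (Hd (N + (n-N))%nat); lra. apply Rmax_r. Qed.
Lemma PQ al be ga s x : 0 < ga -> 0 <= x ->
  (al+x)*(be+x) <= (ga+x)*(s+x) -> (al+x)*(be+x)/((ga+x)*(x+1)) <= (s+x)/(x+1).
Proof. intros. unfold Rdiv.
 replace ((s+x) * /(x+1)) with ((ga+x)*(s+x) * /((ga+x)*(x+1))) by (field; lra).
 apply Rmult_le_compat_r; auto. apply Rlt_le, Rinv_0_lt_compat. nra. Qed.

Lemma QP al be ga s x : 0 < ga -> 0 <= x ->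
  (ga+x)*(s+x) <= (al+x)*(be+x) -> (s+x)/(x+1) <= (al+x)*(be+x)/((ga+x)*(x+1)).
Proof. intros. unfold Rdiv.
 replace ((s+x) * /(x+1)) with ((ga+x)*(s+x) * /((ga+x)*(x+1))) by (field; lra).
 apply Rmult_le_compat_r; auto. apply Rlt_le, Rinv_0_lt_compat. nra. Qed.

Lemma hc_bin_upper al be ga s : 0 < al -> 0 < be -> 0 < ga -> 0 < s -> al + be < ga + s ->
  exists K, 0 <= K /\ forall n, hc al be ga n <= K * bin s n.
Proof. intros Ha Hb Hg Hs HD.
 destruct (nat_arch (al*be/(ga+s-al-be))) as [N HN].
 apply (ratio_upper _ _ N); [intro; apply hc_pos; auto | intro; apply bin_pos; auto |].
 intros n Hn. rewrite hc_S, bin_S, S_INR by auto.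
 pose proof (hc_pos al be ga n Ha Hb Hg). pose proof (bin_pos s n Hs).
 assert (0 <= INR n) by apply pos_INR.
 assert (INR N <= INR n) by (apply le_INR; auto).
 assert (al*be <= (ga+s-al-be) * INR n).
 { apply Rle_trans with ((ga+s-al-be) * INR N). 
   apply (Rmult_le_compat_l (ga+s-al-be)) in HN. field_simplify in HN. lra. lra. lra.
   apply Rmult_le_compat_l; lra. }
 assert (HPQ : (al+INR n)*(be+INR n)/((ga+INR n)*(INR n+1)) <= (s+INR n)/(INR n+1)).
 { apply PQ; auto. nra. }
 replace (hc al be ga n * ((al + INR n) * (be + INR n) / ((ga + INR n) * (INR n + 1))) * bin s n)
   with ((hc al be ga n * bin s n) * ((al + INR n) * (be + INR n) / ((ga + INR n) * (INR n + 1)))) by ring.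
 replace (bin s n * ((s + INR n) / (INR n + 1)) * hc al be ga n)
   with ((hc al be ga n * bin s n) * ((s + INR n) / (INR n + 1))) by ring.
 apply Rmult_le_compat_l; auto. nra. Qed.

Lemma hc_bin_lower al be ga s : 0 < al -> 0 < be -> 0 < ga -> 0 < s ->
  (forall x, 0 <= x -> (ga+x)*(s+x) <= (al+x)*(be+x)) ->
  forall n, bin s n <= hc al be ga n.
Proof. intros Ha Hb Hg Hs HD n.
 pose proof (ratio_tail (bin s) (hc al be ga) 0 (fun n => bin_pos s n Hs)
   (fun n => hc_pos al be ga n Ha Hb Hg)) as T.
 replace (bin s 0 / hc al be ga 0) with 1 in T by (unfold bin, hc; simpl; field).
 enough (HH : forall n, (0 <= n)%nat -> bin s (S n) * hc al be ga n <= hc al be ga (S n) * bin s n).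
 { specialize (T HH n). simpl in T. lra. } clear T n. intros n _.
 rewrite hc_S, bin_S, S_INR by auto.
 pose proof (hc_pos al be ga n Ha Hb Hg). pose proof (bin_pos s n Hs).
 assert (0 <= INR n) by apply pos_INR.
 assert (HPQ : (s+INR n)/(INR n+1) <= (al+INR n)*(be+INR n)/((ga+INR n)*(INR n+1))).
 { apply QP; auto. }
 replace (hc al be ga n * ((al + INR n) * (be + INR n) / ((ga + INR n) * (INR n + 1))) * bin s n)
   with ((hc al be ga n * bin s n) * ((al + INR n) * (be + INR n) / ((ga + INR n) * (INR n + 1)))) by ring.
 replace (bin s n * ((s + INR n) / (INR n + 1)) * hc al be ga n)
   with ((hc al be ga n * bin s n) * ((s + INR n) / (INR n + 1))) by ring.
 apply Rmult_le_compat_l; auto. nra. Qed.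
Lemma bin_radius s : 0 < s -> CV_radius (bin s) = 1.
Proof. intros Hs.
 rewrite (CV_radius_finite_DAlembert (bin s) 1).
 - f_equal. apply Rinv_1.
 - intro n. pose proof (bin_pos s n Hs). lra.
 - lra.
 - apply is_lim_seq_ext with (fun n => 1 + (s - 1) * / (INR n + 1)).
   + intro n. rewrite bin_S. pose proof (bin_pos s n Hs). pose proof (pos_INR n).
     rewrite S_INR.
     replace (bin s n * ((s + INR n) / (INR n + 1)) / bin s n) with ((s+INR n)/(INR n+1)) by (field; lra).
     rewrite Rabs_pos_eq. field. lra.
     apply Rlt_le. apply Rdiv_lt_0_compat; lra.
   + replace (Finite 1) with (Finite (1 + (s-1) * 0)) by (f_equal; ring).
     apply is_lim_seq_plus'. apply is_lim_seq_const.
     assert (H0 : is_lim_seq (fun n => / (INR n + 1)) 0).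
     { apply is_lim_seq_ext with (fun n => / INR (S n)). intro; rewrite S_INR; auto.
       replace (Finite 0) with (Rbar_inv p_infty) by reflexivity.
       apply is_lim_seq_inv. apply -> is_lim_seq_incr_1. apply is_lim_seq_INR. discriminate. }
     apply (is_lim_seq_scal_l _ (s-1) 0 H0). Qed.

Lemma bin_ode s x : 0 < s -> Rabs x < 1 ->
  (1 - x) * PSeries (PS_derive (bin s)) x = s * PSeries (bin s) x.
Proof. intros Hs Hx.
 assert (Hr : Rbar_lt (Rabs x) (CV_radius (bin s))) by (rewrite bin_radius; auto).
 pose proof (ex_pseries_derive _ _ Hr) as E1.
 pose proof (ex_pseries_incr_1 _ _ E1) as E2.
 replace ((1 - x) * PSeries (PS_derive (bin s)) x) with
   (PSeries (PS_derive (bin s)) x - x * PSeries (PS_derive (bin s)) x) by ring.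
 rewrite <- PSeries_incr_1. rewrite <- PSeries_minus by auto.
 rewrite <- PSeries_scal. apply PSeries_ext. intro n.
 unfold PS_minus, PS_scal, PS_incr_1, PS_derive.
 change (plus ?a (opp ?b)) with (a - b). change (scal s ?y) with (s * y).
 destruct n.
 - change zero with 0. rewrite bin_S. unfold bin; simpl. field.
 - rewrite (bin_S s (S n)). rewrite (S_INR (S n)). pose proof (pos_INR (S n)). field. lra. Qed.

Lemma binom_closed s t : 0 < s -> 0 <= t < 1 ->
  ex_series (fun n => bin s n * t ^ n) /\ Series (fun n => bin s n * t ^ n) = Rpower (1 - t) (- s).
Proof. intros Hs Ht.
 assert (Hr : forall x, Rabs x < 1 -> Rbar_lt (Rabs x) (CV_radius (bin s))) by (intros; rewrite bin_radius; auto).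
 split.
 { apply ex_series_Rabs. apply CV_disk_inside. apply Hr. rewrite Rabs_pos_eq; lra. }
 set (h := fun y => PSeries (bin s) y * exp (s * ln (1 - y))).
 assert (Hd : forall x, Rabs x < 1 -> is_derive h x 0).
 { intros x Hx. assert (Hx1 : x < 1) by (apply Rabs_lt_between in Hx; lra).
   assert (HE : is_derive (fun y => exp (s * ln (1 - y))) x (exp (s * ln (1 - x)) * (s * (-1 / (1 - x))))).
   { auto_derive. lra. replace (1 + - x) with (1 - x) by ring. field. lra. }
   pose proof (is_derive_PSeries _ _ (Hr x Hx)) as HF.
   pose proof (is_derive_mult _ _ x _ _ HF HE ltac:(intros; apply Rmult_comm)) as H.
   replace 0 with (PSeries (PS_derive (bin s)) x * exp (s * ln (1 - x)) +
      PSeries (bin s) x * (exp (s * ln (1 - x)) * (s * (-1 / (1 - x))))).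
   exact H.
   pose proof (bin_ode s x Hs Hx) as Hode.
   replace (PSeries (PS_derive (bin s)) x) with (s * PSeries (bin s) x / (1 - x)).
   field. lra. rewrite <- Hode. field. lra. }
 assert (Hh : h t = 1).
 { destruct (Req_dec t 0) as [->|Ht0].
   - unfold h. rewrite PSeries_0. unfold bin; simpl. replace (1-0) with 1 by ring. rewrite ln_1.
     rewrite Rmult_0_r, exp_0. field.
   - destruct (MVT_gen h 0 t (fun _ => 0)) as [c [_ Hc]].
     + intros x Hx. rewrite Rmin_left, Rmax_right in Hx by lra. apply Hd. rewrite Rabs_pos_eq; lra.
     + intros x Hx. rewrite Rmin_left, Rmax_right in Hx by lra.
       apply derivable_continuous_pt. exists 0. apply is_derive_Reals. apply Hd.
       rewrite Rabs_pos_eq; lra.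
     + unfold h in Hc |- *. rewrite PSeries_0 in Hc. replace (bin s 0) with 1 in Hc by (unfold bin; simpl; field).
       replace (1-0) with 1 in Hc by ring. rewrite ln_1, Rmult_0_r, exp_0 in Hc. lra. }
 unfold h in Hh. unfold Rpower. change (Series (fun n => bin s n * t ^ n)) with (PSeries (bin s) t).
 replace (- s * ln (1 - t)) with (- (s * ln (1 - t))) by ring. rewrite exp_Ropp.
 pose proof (exp_pos (s * ln (1 - t))).
 apply Rmult_eq_reg_r with (exp (s * ln (1 - t))). rewrite Hh. field. lra. lra. Qed.
Lemma Series_nonneg (a : nat -> R) : (forall n, 0 <= a n) -> ex_series a -> 0 <= Series a.
Proof. intros H E. replace 0 with (Series (fun n => 0 * a n)).
 apply Series_le; auto. intro n; specialize (H n); lra.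
 rewrite Series_scal_l; ring. Qed.

Lemma hypF_upper al be ga s : 0 < al -> 0 < be -> 0 < ga -> 0 < s -> al + be < ga + s ->
  exists K, 0 <= K /\ forall t, 0 <= t < 1 ->
    ex_series (hyp_term al be ga t) /\ hypF al be ga t <= K * Rpower (1 - t) (- s).
Proof. intros Ha Hb Hg Hs HD. destruct (hc_bin_upper al be ga s Ha Hb Hg Hs HD) as [K [HK HKb]].
 exists K. split; auto. intros t Ht.
 destruct (binom_closed s t Hs Ht) as [Eb Sb].
 assert (Hle : forall n, 0 <= hyp_term al be ga t n <= K * (bin s n * t ^ n)).
 { intro n. rewrite hyp_term_hc. pose proof (hc_pos al be ga n Ha Hb Hg).
   assert (0 <= t ^ n) by (apply pow_le; lra). split. nra.
   rewrite <- Rmult_assoc. apply Rmult_le_compat_r; auto. }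
 assert (Ek : ex_series (fun n => K * (bin s n * t ^ n))) by (apply (ex_series_scal_l K _ Eb)).
 assert (E : ex_series (hyp_term al be ga t)).
 { apply (ex_series_le (hyp_term al be ga t) (fun n => K * (bin s n * t ^ n))); auto.
   intro n. change (norm ?y) with (Rabs y). rewrite Rabs_pos_eq; apply Hle. }
 split; auto. unfold hypF. apply Rle_trans with (Series (fun n => K * (bin s n * t ^ n))). apply Series_le; auto.
 rewrite Series_scal_l, Sb. lra. Qed.

Lemma hypF_ge1 al be ga t : 0 < al -> 0 < be -> 0 < ga -> 0 <= t ->
  ex_series (hyp_term al be ga t) -> 1 <= hypF al be ga t.
Proof. intros Ha Hb Hg Ht E. unfold hypF. rewrite Series_incr_1 by auto.
 rewrite hyp_term_hc. replace (hc al be ga 0 * t ^ 0) with 1 by (unfold hc; simpl; field).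
 assert (0 <= Series (fun k => hyp_term al be ga t (S k))).
 { apply Series_nonneg. intro n. rewrite hyp_term_hc. pose proof (hc_pos al be ga (S n) Ha Hb Hg).
   assert (0 <= t ^ S n) by (apply pow_le; lra). nra.
   apply (proj1 (ex_series_incr_1 (hyp_term al be ga t))). auto. }
 lra. Qed.

Lemma hypF_lower al be ga s t : 0 < al -> 0 < be -> 0 < ga -> 0 < s ->
  (forall x, 0 <= x -> (ga+x)*(s+x) <= (al+x)*(be+x)) -> 0 <= t < 1 ->
  ex_series (hyp_term al be ga t) -> Rpower (1 - t) (- s) <= hypF al be ga t.
Proof. intros Ha Hb Hg Hs HD Ht E. destruct (binom_closed s t Hs Ht) as [Eb Sb].
 rewrite <- Sb. unfold hypF. apply Series_le; auto. intro n. rewrite hyp_term_hc.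
 pose proof (bin_pos s n Hs). assert (0 <= t ^ n) by (apply pow_le; lra). split. nra.
 apply Rmult_le_compat_r; auto. apply hc_bin_lower; auto. Qed.

Lemma hc_radius al be ga : 0 < al -> 0 < be -> 0 < ga -> Rbar_lt 0 (CV_radius (hc al be ga)).
Proof. intros Ha Hb Hg.
 destruct (hypF_upper al be ga (al+be+1) Ha Hb Hg ltac:(lra) ltac:(lra)) as [K [HK HU]].
 destruct (HU (1/2) ltac:(lra)) as [E _].
 assert (Hd : CV_disk (hc al be ga) (1/2)).
 { unfold CV_disk. apply ex_series_ext with (hyp_term al be ga (1/2)); auto.
   intro n. rewrite hyp_term_hc. rewrite Rabs_pos_eq. auto.
   pose proof (hc_pos al be ga n Ha Hb Hg). assert (0 <= (1/2) ^ n) by (apply pow_le; lra). nra. }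
 pose proof (proj1 (Lub_Rbar_correct (CV_disk (hc al be ga))) (1/2) Hd) as H.
 unfold CV_radius. destruct (Lub_Rbar (CV_disk (hc al be ga))); simpl in *; auto; lra. Qed.

Lemma hypF_0 al be ga : hypF al be ga 0 = 1.
Proof. rewrite hypF_PS, PSeries_0. unfold hc; simpl; field. Qed.

Lemma Gm_0 a b m : Gm a b m 0 = 0.
Proof. unfold Gm. rewrite !hypF_0. unfold Rpower. replace (1-0) with 1 by ring.
 rewrite ln_1, Rmult_0_r, exp_0. ring. Qed.

Lemma deriv_PS0 al be ga : 0 < al -> 0 < be -> 0 < ga ->
  is_derive (PSeries (hc al be ga)) 0 (al * be / ga).
Proof. intros. replace (al*be/ga) with (PSeries (PS_derive (hc al be ga)) 0).
 apply is_derive_PSeries. rewrite Rabs_R0. apply hc_radius; auto.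
 rewrite PSeries_0. unfold PS_derive, hc; simpl. field. lra. Qed.

Lemma G_deriv a b m : 0 < a < 1 -> 0 < b -> is_derive (Gm a b m) 0 (m0 a b - m).
Proof. intros Ha Hb.
 pose proof (deriv_PS0 (1-a) b (2*b+1) ltac:(lra) Hb ltac:(lra)) as D1.
 pose proof (deriv_PS0 (1-a) (b+1) (2*b+1) ltac:(lra) ltac:(lra) ltac:(lra)) as D2.
 assert (DE : is_derive (fun t => exp ((1-m) * ln (1 - t))) 0 (-(1-m))).
 { auto_derive. lra. replace (1 + - 0) with 1 by ring. rewrite ln_1, Rmult_0_r, exp_0. field. }
 pose proof (is_derive_mult _ _ 0 _ _ DE D2 ltac:(intros; apply Rmult_comm)) as DM.
 pose proof (is_derive_minus _ _ 0 _ _ D1 DM) as DG.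
 apply is_derive_ext with (fun t => PSeries (hc (1-a) b (2*b+1)) t -
     exp ((1-m) * ln (1 - t)) * PSeries (hc (1-a) (b+1) (2*b+1)) t).
 { intro t. unfold Gm, Rpower. rewrite !hypF_PS. reflexivity. }
 replace (m0 a b - m) with ((1-a)*b/(2*b+1) -
   ((-(1-m)) * PSeries (hc (1-a) (b+1) (2*b+1)) 0 + exp ((1-m) * ln (1 - 0)) * ((1-a)*(b+1)/(2*b+1)))).
 exact DG.
 rewrite <- hypF_PS, hypF_0. replace (1-0) with 1 by ring. rewrite ln_1, Rmult_0_r, exp_0.
 unfold m0. field. lra. Qed.

Lemma deriv_nonneg f D : is_derive f 0 D -> f 0 = 0 -> (forall t, 0 < t < 1 -> 0 <= f t) -> 0 <= D.
Proof. intros H H0 Hp. apply is_derive_Reals in H.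
 destruct (Rle_lt_dec 0 D) as [|HD]; auto. exfalso.
 destruct (H (-D) ltac:(lra)) as [del Hdel].
 pose proof (cond_pos del).
 set (h := Rmin (del/2) (1/2)).
 assert (0 < h) by (unfold h; apply Rmin_glb_lt; lra).
 assert (h <= del/2) by apply Rmin_l. assert (h <= 1/2) by apply Rmin_r.
 specialize (Hdel h ltac:(lra) ltac:(rewrite Rabs_pos_eq; lra)).
 rewrite Rplus_0_l, H0 in Hdel. specialize (Hp h ltac:(lra)).
 assert (0 <= (f h - 0) / h) by (apply Rmult_le_pos; [lra | apply Rlt_le, Rinv_0_lt_compat; lra]).
 apply Rabs_lt_between in Hdel. lra. Qed.

Lemma deriv_nonpos f D : is_derive f 0 D -> f 0 = 0 -> (forall t, 0 < t < 1 -> f t <= 0) -> D <= 0.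
Proof. intros H H0 Hp. apply is_derive_Reals in H.
 destruct (Rle_lt_dec D 0) as [|HD]; auto. exfalso.
 destruct (H D ltac:(lra)) as [del Hdel].
 pose proof (cond_pos del).
 set (h := Rmin (del/2) (1/2)).
 assert (0 < h) by (unfold h; apply Rmin_glb_lt; lra).
 assert (h <= del/2) by apply Rmin_l. assert (h <= 1/2) by apply Rmin_r.
 specialize (Hdel h ltac:(lra) ltac:(rewrite Rabs_pos_eq; lra)).
 rewrite Rplus_0_l, H0 in Hdel. specialize (Hp h ltac:(lra)).
 assert ((f h - 0) / h <= 0).
 { unfold Rdiv. replace ((f h - 0) * / h) with (- ((- f h) * / h)) by ring.
   assert (0 <= - f h * / h) by (apply Rmult_le_pos; [lra | apply Rlt_le, Rinv_0_lt_compat; lra]). lra. }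
 apply Rabs_lt_between in Hdel. lra. Qed.
Lemma Rpower_exp l y : Rpower (exp l) y = exp (y * l).
Proof. unfold Rpower. rewrite ln_exp. auto. Qed.

Lemma neg_near1 a b m : 0 < a < 1 -> 0 < b -> a + b < 1 -> a + b < m ->
  exists t, 0 < t < 1 /\ Gm a b m t < 0.
Proof. intros Ha Hb Hab Hm. set (s := (m - a - b) / 2).
 assert (Hs : 0 < s) by (unfold s; lra).
 destruct (hypF_upper (1-a) b (2*b+1) s ltac:(lra) Hb ltac:(lra) Hs ltac:(lra)) as [K [HK HU1]].
 destruct (hypF_upper (1-a) (b+1) (2*b+1) 1 ltac:(lra) ltac:(lra) ltac:(lra) ltac:(lra) ltac:(lra)) as [K2 [_ HU2]].
 set (L := ln (K + 2)). assert (HL : 0 < L) by (unfold L; rewrite <- ln_1; apply ln_increasing; lra).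
 set (lam := - L / s). assert (Hlam : lam < 0).
 { unfold lam, Rdiv. rewrite Ropp_mult_distr_l_reverse. apply Ropp_lt_gt_0_contravar.
   apply Rmult_lt_0_compat; auto. apply Rinv_0_lt_compat; auto. }
 set (u := exp lam). assert (Hu : 0 < u < 1).
 { unfold u. split. apply exp_pos. rewrite <- exp_0. apply exp_increasing; auto. }
 exists (1 - u). split. lra.
 assert (Ht : 0 <= 1 - u < 1) by lra.
 destruct (HU1 (1-u) Ht) as [_ F1]. destruct (HU2 (1-u) Ht) as [E2 _].
 assert (F2 : Rpower (1 - (1-u)) (- (1 - a - b)) <= hypF (1-a) (b+1) (2*b+1) (1-u)).
 { apply hypF_lower; try lra; auto. intros x Hx. nra. }
 replace (1 - (1-u)) with u in F1, F2 by ring.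
 unfold Gm. replace (1 - (1-u)) with u by ring.
 assert (RP : forall y, Rpower u y = exp (y * lam)) by (intro; unfold u; apply Rpower_exp).
 rewrite !RP in F1, F2 |- *.
 assert (E1 : exp (- s * lam) = K + 2).
 { replace (- s * lam) with L by (unfold lam; field; lra). unfold L. rewrite exp_ln; lra. }
 rewrite E1 in F1.
 assert (E3 : exp (1 - m) * 0 = 0) by ring.
 pose proof (exp_pos ((1 - m) * lam)) as P1.
 assert (F3 : exp ((1 - m) * lam) * exp (- (1 - a - b) * lam) <=
              exp ((1 - m) * lam) * hypF (1 - a) (b + 1) (2 * b + 1) (1 - u))
   by (apply Rmult_le_compat_l; lra).
 rewrite <- exp_plus in F3.
 replace ((1 - m) * lam + - (1 - a - b) * lam) with (L + L) in F3 by (unfold lam, s; field; lra).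
 rewrite exp_plus in F3. unfold L in F3. rewrite exp_ln in F3 by lra.
 nra. Qed.

Lemma pos_near1 a b m : 0 < a < 1 -> 0 < b -> m < 1 -> m < a + b ->
  exists t, 0 < t < 1 /\ 0 < Gm a b m t.
Proof. intros Ha Hb Hm1 Hm. set (e := Rmax 0 (1 - a - b)).
 assert (He1 : 0 <= e) by apply Rmax_l. assert (He2 : 1 - a - b <= e) by apply Rmax_r.
 assert (He3 : e < 1 - m) by (apply Rmax_lub_lt; lra).
 set (s := (1 - m + e) / 2).
 assert (Hs : 0 < s) by (unfold s; lra).
 destruct (hypF_upper (1-a) (b+1) (2*b+1) s ltac:(lra) ltac:(lra) ltac:(lra) Hs ltac:(unfold s; lra)) as [K [HK HU2]].
 destruct (hypF_upper (1-a) b (2*b+1) 1 ltac:(lra) ltac:(lra) ltac:(lra) ltac:(lra) ltac:(lra)) as [K1 [_ HU1]].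
 set (d := 1 - m - s). assert (Hd : 0 < d) by (unfold d, s; lra).
 set (L := ln (K + 2)). assert (HL : 0 < L) by (unfold L; rewrite <- ln_1; apply ln_increasing; lra).
 set (lam := - L / d). assert (Hlam : lam < 0).
 { unfold lam, Rdiv. rewrite Ropp_mult_distr_l_reverse. apply Ropp_lt_gt_0_contravar.
   apply Rmult_lt_0_compat; auto. apply Rinv_0_lt_compat; auto. }
 set (u := exp lam). assert (Hu : 0 < u < 1).
 { unfold u. split. apply exp_pos. rewrite <- exp_0. apply exp_increasing; auto. }
 exists (1 - u). split. lra.
 assert (Ht : 0 <= 1 - u < 1) by lra.
 destruct (HU1 (1-u) Ht) as [E1 _]. destruct (HU2 (1-u) Ht) as [_ F2].
 pose proof (hypF_ge1 (1-a) b (2*b+1) (1-u) ltac:(lra) Hb ltac:(lra) ltac:(lra) E1) as F1.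
 replace (1 - (1-u)) with u in F2 by ring.
 unfold Gm. replace (1 - (1-u)) with u by ring.
 assert (RP : forall y, Rpower u y = exp (y * lam)) by (intro; unfold u; apply Rpower_exp).
 rewrite !RP in F2 |- *.
 pose proof (exp_pos ((1 - m) * lam)) as P1.
 assert (F3 : exp ((1 - m) * lam) * hypF (1 - a) (b + 1) (2 * b + 1) (1 - u) <=
              exp ((1 - m) * lam) * (K * exp (- s * lam)))
   by (apply Rmult_le_compat_l; lra).
 replace (exp ((1 - m) * lam) * (K * exp (- s * lam))) with (K * exp ((1 - m) * lam + - s * lam)) in F3
   by (rewrite exp_plus; ring).
 replace ((1 - m) * lam + - s * lam) with (- L) in F3.
 2:{ replace ((1 - m) * lam + - s * lam) with (d * lam) by (unfold d; ring). unfold lam; field; lra. }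
 rewrite exp_Ropp in F3. unfold L in F3. rewrite exp_ln in F3 by lra.
 assert (K * / (K + 2) < 1).
 { apply Rmult_lt_reg_r with (K + 2). lra. field_simplify; lra. }
 lra. Qed.

Theorem lemma4 (a b m : R) (ha : 0 < a < 1) (hb : 0 < b) :
  ((forall t : R, 0 < t < 1 -> 0 <= Gm a b m t) -> E_plus a b m) /\
  ((forall t : R, 0 < t < 1 -> Gm a b m t <= 0) -> E_minus a b m).
Proof.
 assert (Hm0 : m0 a b * (1 + 2 * b) = a + 2 * b) by (unfold m0; field; lra).
 assert (Hm01 : m0 a b < 1) by nra.
 split.
 - intro Hp. assert (Hm : m <= m0 a b).
   { pose proof (deriv_nonneg _ _ (G_deriv a b m ha hb) (Gm_0 a b m) Hp). lra. }
   split; auto.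
   destruct (Rlt_le_dec (a + b) 1) as [Hab|Hab].
   + destruct (Rtotal_order m (a + b)) as [H|[H|H]].
     * right; left; lra.
     * right; right. split; auto. subst m. nra.
     * exfalso. destruct (neg_near1 a b m ha hb Hab H) as [t [Ht Hg]]. specialize (Hp t Ht). lra.
   + left; lra.
 - intro Hn. assert (Hm : m0 a b <= m).
   { pose proof (deriv_nonpos _ _ (G_deriv a b m ha hb) (Gm_0 a b m) Hn). lra. }
   split; [lra|].
   destruct (Rlt_le_dec (a + b) 1) as [Hab|Hab].
   + destruct (Rtotal_order m (a + b)) as [H|[H|H]].
     * exfalso. destruct (pos_near1 a b m ha hb ltac:(lra) H) as [t [Ht Hg]]. specialize (Hn t Ht). lra.
     * right; left. split; [|split; auto]. subst m. nra.
     * right; right; lra.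
   + left. split; [lra|]. destruct (Rlt_le_dec m 1) as [H|H]; [|lra].
     exfalso. destruct (pos_near1 a b m ha hb H ltac:(lra)) as [t [Ht Hg]]. specialize (Hn t Ht). lra.
Qed.
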